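(* Let $W\in\{\mathrm{A}_{\frac12\infty},\mathrm{D}_{\frac12\infty}\}$. The endomorphisms $\dot J_W$, ${}^t\dot J_W$ of $H_{W,\mathbb{C}}$ and their inverses extend to bounded operators on the Hilbert space $\overline H_{W,\mathbb{C}}$, and the extensions of $\dot J_W$ and ${}^t\dot J_W$ (resp. of their inverses) are adjoint (transpose) to each other with respect to $\langle\cdot,\cdot\rangle$.
   Context: Index sets: $C_{W,0}=\{c_0^{(n)}:n\ge1\}$ for $W=\mathrm{A}_{\frac12\infty}$ and $C_{W,0}=\{c_0^{(n)}:n\ge1\}\cup\{c_0^+,c_0^-\}$ for $W=\mathrm{D}_{\frac12\infty}$; $C_{W,1}=\{c_1^{(n)}:n\ge1\}$; $C_W=C_{W,0}\sqcup C_{W,1}$. Adjacency: $c_0^{(n)}$ is adjacent to $c_1^{(n)}$ and $c_1^{(n+1)}$ for all $n\ge1$, and (type D only) $c_0^{\pm}$ are adjacent to $c_1^{(1)}$; no other adjacencies. (Geometrically these are the critical points of $f_W$, with $c\in C_{W,0}$ adjacent to $c'\in C_{W,1}$ iff $c$ lies in the closure of the bounded region of the real zero set containing $c'$.) $H_W=\bigoplus_{c\in C_W}\mathbb{Z}\gamma_c$, $H_{W,i}=\bigoplus_{c\in C_{W,i}}\mathbb{Z}\gamma_c$, $H_{W,\mathbb{C}}=H_W\otimes\mathbb{C}$ with Hermitian product $\langle\sum a_c\gamma_c,\sum b_c\gamma_c\rangle=\sum a_c\bar b_c$; $\overline H_{W,\mathbb{C}}$ is its $\ell^2$-completion. $J_W$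 is the bilinear form with $J_W(\gamma_c,\gamma_{c'})=1$ if $c=c'$, $-1$ if $c\in C_{W,0}$, $c'\in C_{W,1}$ adjacent, $0$ otherwise; ${}^tJ_W(\xi,\eta)=J_W(\eta,\xi)$. The associated endomorphisms are $\dot J_W(u)=\sum_{c\in C_W}J_W(u,\gamma_c)\gamma_c$ and ${}^t\dot J_W(u)=\sum_{c}{}^tJ_W(u,\gamma_c)\gamma_c$ (finite sums by local finiteness). *)

(* Defs.v *)
From HB Require Import structures.
From mathcomp Require Import all_boot all_order all_algebra.
From mathcomp Require Import all_classical all_reals.
From mathcomp Require Import ereal esum.
From mathcomp Require Import complex.
Set Implicit Arguments. Unset Strict Implicit. Unset Printing Implicit Defensive.
Import Order.TTheory GRing.Theory Num.Theory.
Local Open Scope classical_set_scope.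
Local Open Scope ring_scope.

Inductive diagram := A_half_inf | D_half_inf.

(** Ambient type of critical points:
    [c0 n] = c_0^{(n)}, [c1 n] = c_1^{(n)} (meaningful for n >= 1),
    [c0p] = c_0^+, [c0m] = c_0^-. *)
Inductive vtx := c0 of nat | c1 of nat | c0p | c0m.

Definition vtx_code (v : vtx) : nat * nat :=
  match v with c0 n => (0, n) | c1 n => (1, n) | c0p => (2, 0) | c0m => (3, 0) end.
Definition vtx_decode (p : nat * nat) : option vtx :=
  match p with
  | (0, n) => Some (c0 n) | (1, n) => Some (c1 n)
  | (2, _) => Some c0p | (3, _) => Some c0m | _ => None end%N.
Lemma vtx_codeK : pcancel vtx_code vtx_decode. Proof. by case. Qed.
HB.instance Definition _ := Countable.copy vtx (pcan_type vtx_codeK).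

Definition CW0 (W : diagram) : set vtx := fun c =>
  match c with
  | c0 n => (1 <= n)%N
  | c0p | c0m => W = D_half_inf
  | c1 _ => False end.
Definition CW1 (W : diagram) : set vtx := fun c =>
  match c with c1 n => (1 <= n)%N | _ => False end.
Definition CW (W : diagram) : set vtx := CW0 W `|` CW1 W.

Definition adj (W : diagram) (c c' : vtx) : Prop :=
  CW0 W c /\ CW1 W c' /\
  match c, c' with
  | c0 n, c1 m => m = n \/ m = n.+1
  | c0p, c1 m => m = 1%N
  | c0m, c1 m => m = 1%N
  | _, _ => False end.

Definition Jentry (R : realType) (W : diagram) (c c' : vtx) : R[i] :=
  if `[< CW W c /\ c = c' >] then 1
  else if `[< adj W c c' >] then -1 else 0.

(** Vectors of H_{W,C}: finitely supported complex functions on C_W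
    (u = sum_c u(c) gamma_c). *)
Definition vec (R : realType) := vtx -> R[i].
Definition inH (R : realType) (W : diagram) (u : vec R) : Prop :=
  (forall c, ~ CW W c -> u c = 0) /\ finite_set [set c | u c != 0].

Definition JW (R : realType) (W : diagram) (u v : vec R) : R[i] :=
  \sum_(c \in CW W) \sum_(c' \in CW W) u c * v c' * @Jentry R W c c'.
Definition tJW (R : realType) (W : diagram) (u v : vec R) : R[i] := JW W v u.

Definition gamma (R : realType) (c : vtx) : vec R :=
  fun c' => if `[< c' = c >] then 1 else 0.

Definition JWdot (R : realType) (W : diagram) (u : vec R) : vec R :=
  fun c => if `[< CW W c >] then JW W u (@gamma R c) else 0.
Definition tJWdot (R : realType) (W : diagram) (u : vec R) : vec R :=
  fun c => if `[< CW W c >] then tJW W u (@gamma R c) else 0.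

(** The Hilbert space completion \bar H_{W,C} = l^2(C_W). *)
Definition sqnorm (R : realType) (x : R[i]) : R := complex.Re x ^+ 2 + complex.Im x ^+ 2.
Definition l2norm2 (R : realType) (f : vec R) : \bar R :=
  \esum_(c in [set: vtx]) (sqnorm (f c))%:E.
Definition inL2 (R : realType) (W : diagram) (f : vec R) : Prop :=
  (forall c, ~ CW W c -> f c = 0) /\ (l2norm2 f < +oo)%E.

(** Unordered sum of a real family (meaningful for absolutely summable families). *)
Definition rsum (R : realType) (a : vtx -> R) : R :=
  fine (\esum_(c in [set: vtx]) (Num.max (a c) 0)%:E)
  - fine (\esum_(c in [set: vtx]) (Num.max (- a c) 0)%:E).

Definition herm (R : realType) (f g : vec R) : R[i] :=
  Complex (rsum (fun c => complex.Re (f c * conjc (g c))))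
          (rsum (fun c => complex.Im (f c * conjc (g c)))).

Definition bounded_extension (R : realType) (W : diagram)
    (phi T : vec R -> vec R) : Prop :=
  [/\ (forall f, inL2 W f -> inL2 W (T f)),
      (forall (a : R[i]) f g, inL2 W f -> inL2 W g ->
          T (fun c => a * f c + g c) = (fun c => a * T f c + T g c)),
      (exists M : R, 0 <= M /\
          forall f, inL2 W f -> (l2norm2 (T f) <= M%:E * l2norm2 f)%E)
    & (forall u, inH W u -> T u = phi u)].

Definition inverse_on_H (R : realType) (W : diagram) (phi psi : vec R -> vec R) : Prop :=
  forall u, inH W u -> [/\ inH W (psi u), phi (psi u) = u & psi (phi u) = u].

Definition adjoint_pair (R : realType) (W : diagram) (T S : vec R -> vec R) : Prop :=
  forall f g, inL2 W f -> inL2 W g -> herm (T f) g = herm f (S g).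

(* Main.v *)
Require Import Defs.
From HB Require Import structures.
From mathcomp Require Import all_boot all_order all_algebra.
From mathcomp Require Import all_classical all_reals.
From mathcomp Require Import ereal esum complex.
From mathcomp Require Import ring lra zify.
Set Implicit Arguments. Unset Strict Implicit. Unset Printing Implicit Defensive.
Import Order.TTheory GRing.Theory Num.Theory.
Local Open Scope classical_set_scope.
Local Open Scope ring_scope.

Lemma esum_inv (R : realType) (s : vtx -> vtx) (hs : involutive s) (a : vtx -> \bar R) :
  \esum_(c in [set: vtx]) a (s c) = \esum_(c in [set: vtx]) a c.
Proof.
by rewrite -(reindex_esum setT setT s) // setTT_bijective; exact: inv_bij.
Qed.

Lemma max_decomp (R : realType) (x : R) : Num.max x 0 - Num.max (-x) 0 = x.
Proof.
have [h|h] := leP x 0.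
  by rewrite max_l ?oppr_ge0 // sub0r opprK.
by rewrite max_r ?subr0 // oppr_le0 ltW.
Qed.

Lemma max_le_abs (R : realType) (x : R) : Num.max x 0 <= `|x|.
Proof. by rewrite ge_max normr_ge0 ler_norm. Qed.

Lemma max_le_absN (R : realType) (x : R) : Num.max (- x) 0 <= `|x|.
Proof. by rewrite -normrN max_le_abs. Qed.

Lemma max_ge0 (R : realType) (x : R) : 0 <= Num.max x 0.
Proof. by rewrite le_max lexx orbT. Qed.

Definition absum (R : realType) (a : vtx -> R) :=
  (\esum_(c in [set: vtx]) (`|a c|)%:E < +oo)%E.

Lemma esum_finE (R : realType) (b : vtx -> R) (B : \bar R) :
  (forall c, 0 <= b c) -> (\esum_(c in [set: vtx]) (b c)%:E <= B)%E -> (B < +oo)%E ->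
  \esum_(c in [set: vtx]) (b c)%:E = (fine (\esum_(c in [set: vtx]) (b c)%:E))%:E.
Proof.
move=> b0 hB Boo; rewrite fineK // ge0_fin_numE; last by apply: esum_ge0 => c _; rewrite lee_fin.
exact: le_lt_trans hB Boo.
Qed.

Lemma absum_le (R : realType) (a b : vtx -> R) :
  absum a -> (forall c, `|b c| <= `|a c|) -> absum b.
Proof.
move=> ha hb; apply: le_lt_trans ha; apply: le_esum => c _; by rewrite lee_fin.
Qed.

Lemma absumD (R : realType) (a b : vtx -> R) :
  absum a -> absum b -> absum (fun c => a c + b c).
Proof.
move=> ha hb; rewrite /absum.
apply: (@le_lt_trans _ _ (\esum_(c in [set: vtx]) ((`|a c|)%:E + (`|b c|)%:E))%E).
  by apply: le_esum => c _; rewrite -EFinD lee_fin ler_normD.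
by rewrite esumD ?lte_add_pinfty // => c _; rewrite lee_fin normr_ge0.
Qed.

Lemma esum_le_abs (R : realType) (a : vtx -> R) (b : vtx -> R) :
  absum a -> (forall c, 0 <= b c) -> (forall c, b c <= `|a c|) ->
  \esum_(c in [set: vtx]) (b c)%:E = (fine (\esum_(c in [set: vtx]) (b c)%:E))%:E.
Proof.
move=> ha b0 hb; apply: (esum_finE b0 _ ha); apply: le_esum => c _; by rewrite lee_fin.
Qed.

Lemma rsumN (R : realType) (a : vtx -> R) : rsum (fun c => - a c) = - rsum a.
Proof.
rewrite /rsum opprB; congr (_ - _); congr fine; apply: eq_esum => c _;
  by rewrite ?opprK.
Qed.

Lemma rsum_inv (R : realType) (s : vtx -> vtx) (hs : involutive s) (a : vtx -> R) :
  rsum (fun c => a (s c)) = rsum a.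
Proof.
rewrite /rsum (esum_inv hs (fun c => (Num.max (a c) 0)%:E)).
by rewrite (esum_inv hs (fun c => (Num.max (- a c) 0)%:E)).
Qed.

Lemma esumD3 (R : realType) (x y z : vtx -> R) :
  (forall c, 0 <= x c) -> (forall c, 0 <= y c) -> (forall c, 0 <= z c) ->
  (\esum_(c in [set: vtx]) (x c + (y c + z c))%:E =
   \esum_(c in [set: vtx]) (x c)%:E + (\esum_(c in [set: vtx]) (y c)%:E + \esum_(c in [set: vtx]) (z c)%:E))%E.
Proof.
move=> hx hy hz.
rewrite (eq_esum (b := fun c => ((x c)%:E + ((y c)%:E + (z c)%:E))%E)); last by move=> c _; rewrite !EFinD.
rewrite esumD; [|by move=> c _; rewrite lee_fin|by move=> c _; rewrite -EFinD lee_fin addr_ge0].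
by rewrite esumD // => c _; rewrite lee_fin.
Qed.

Lemma rsumD (R : realType) (a b : vtx -> R) :
  absum a -> absum b -> rsum (fun c => a c + b c) = rsum a + rsum b.
Proof.
move=> ha hb; have hab := absumD ha hb.
rewrite /rsum.
have E1 := esum_le_abs ha (fun c => max_ge0 (a c)) (fun c => max_le_abs (a c)).
have E2 := esum_le_abs ha (fun c => max_ge0 (- a c)) (fun c => max_le_absN (a c)).
have E3 := esum_le_abs hb (fun c => max_ge0 (b c)) (fun c => max_le_abs (b c)).
have E4 := esum_le_abs hb (fun c => max_ge0 (- b c)) (fun c => max_le_absN (b c)).
have E5 := esum_le_abs hab (fun c => max_ge0 (a c + b c)) (fun c => max_le_abs (a c + b c)).
have E6 := esum_le_abs hab (fun c => max_ge0 (- (a c + b c))) (fun c => max_le_absN (a c + b c)).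
set x1 := fine _ in E1; set x2 := fine _ in E2; set x3 := fine _ in E3.
set x4 := fine _ in E4; set x5 := fine _ in E5; set x6 := fine _ in E6.
have key : forall c, Num.max (a c + b c) 0 + (Num.max (- a c) 0 + Num.max (- b c) 0)
   = Num.max (- (a c + b c)) 0 + (Num.max (a c) 0 + Num.max (b c) 0).
  move=> c; have := max_decomp (a c); have := max_decomp (b c);
  have := max_decomp (a c + b c); lra.
have : (\esum_(c in [set: vtx]) (Num.max (a c + b c) 0 + (Num.max (- a c) 0 + Num.max (- b c) 0))%:E
   = \esum_(c in [set: vtx]) (Num.max (- (a c + b c)) 0 + (Num.max (a c) 0 + Num.max (b c) 0))%:E)%E.
  by apply: eq_esum => c _; rewrite key.
rewrite !esumD3; try by move=> c; apply: max_ge0.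
rewrite E1 E2 E3 E4 E5 E6 -!EFinD => /eqP; rewrite eqe => /eqP h.
have fE : forall r : R, fine r%:E = r by [].
rewrite !fE. lra.
Qed.
Lemma sqnormD (R : realType) (a b : R[i]) :
  sqnorm (a + b) <= 2 * sqnorm a + 2 * sqnorm b.
Proof. case: a => ax ay; case: b => bx bY; rewrite /sqnorm /=. have := sqr_ge0 (ax - bx); have := sqr_ge0 (ay - bY). nra. Qed.

Lemma sqnormM (R : realType) (a b : R[i]) : sqnorm (a * b) = sqnorm a * sqnorm b.
Proof. case: a => ax ay; case: b => bx bY; rewrite /sqnorm /=. ring. Qed.

Lemma testring (R : realType) (a b c: R[i]) : a * (b + c) = c * a + a * b.
Proof. ring. Qed.

Lemma Recj (R : realType) (a b : R[i]) : complex.Re (a * conjc b) = complex.Re a * complex.Re b + complex.Im a * complex.Im b.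
Proof. case: a => ax ay; case: b => bx bY /=. ring. Qed.

Lemma sqnorm_ge0 (R : realType) (a : R[i]) : 0 <= sqnorm a.
Proof. by rewrite /sqnorm addr_ge0 // sqr_ge0. Qed.

Lemma sqnormN (R : realType) (a : R[i]) : sqnorm (- a) = sqnorm a.
Proof. by case: a => ax ay; rewrite /sqnorm /= !sqrrN. Qed.

Definition L2f (R : realType) (f : vec R) := (l2norm2 f < +oo)%E.

Lemma esum_sq_le (R : realType) (f g : vec R) :
  (forall c, sqnorm (g c) <= sqnorm (f c)) -> (l2norm2 g <= l2norm2 f)%E.
Proof. by move=> h; apply: le_esum => c _; rewrite lee_fin. Qed.

Lemma L2D (R : realType) (f g : vec R) : L2f f -> L2f g -> L2f (fun c => f c + g c).
Proof.
move=> hf hg; rewrite /L2f /l2norm2.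
apply: (@le_lt_trans _ _ (\esum_(c in [set: vtx]) ((sqnorm (f c))%:E + (sqnorm (f c))%:E +
   ((sqnorm (g c))%:E + (sqnorm (g c))%:E)))%E).
  apply: le_esum => c _; rewrite -!EFinD lee_fin.
  by apply: (le_trans (sqnormD _ _)); lra.
rewrite esumD; [|by move=> c _; rewrite -EFinD lee_fin addr_ge0 ?sqnorm_ge0
                |by move=> c _; rewrite -EFinD lee_fin addr_ge0 ?sqnorm_ge0].
by rewrite !esumD ?lte_add_pinfty // => c _; rewrite lee_fin sqnorm_ge0.
Qed.

Lemma L2N (R : realType) (f : vec R) : L2f f -> L2f (fun c => - f c).
Proof.
by move=> hf; apply: le_lt_trans hf; apply: esum_sq_le => c; rewrite sqnormN.
Qed.

Lemma absum_Re (R : realType) (f g : vec R) : L2f f -> L2f g ->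
  absum (fun c => complex.Re (f c * conjc (g c))).
Proof.
move=> hf hg; rewrite /absum.
apply: (@le_lt_trans _ _ (\esum_(c in [set: vtx]) ((sqnorm (f c))%:E + (sqnorm (g c))%:E))%E).
  apply: le_esum => c _; rewrite -EFinD lee_fin.
  case: (f c) => a b; case: (g c) => x y; rewrite /sqnorm /=.
  rewrite ler_norml; apply/andP; split.
    by have := sqr_ge0 (a + x); have := sqr_ge0 (b + y); nra.
  by have := sqr_ge0 (a - x); have := sqr_ge0 (b - y); nra.
by rewrite esumD ?lte_add_pinfty // => c _; rewrite lee_fin sqnorm_ge0.
Qed.

Lemma absum_Im (R : realType) (f g : vec R) : L2f f -> L2f g ->
  absum (fun c => complex.Im (f c * conjc (g c))).
Proof.
move=> hf hg; rewrite /absum.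
apply: (@le_lt_trans _ _ (\esum_(c in [set: vtx]) ((sqnorm (f c))%:E + (sqnorm (g c))%:E))%E).
  apply: le_esum => c _; rewrite -EFinD lee_fin.
  case: (f c) => a b; case: (g c) => x y; rewrite /sqnorm /=.
  rewrite ler_norml; apply/andP; split.
    by have := sqr_ge0 (a - y); have := sqr_ge0 (b + x); nra.
  by have := sqr_ge0 (a + y); have := sqr_ge0 (b - x); nra.
by rewrite esumD ?lte_add_pinfty // => c _; rewrite lee_fin sqnorm_ge0.
Qed.

Lemma addcE (R : realType) (a b c d : R) :
  (Complex a b + Complex c d = Complex (a + c) (b + d))%R.
Proof. by []. Qed.
Lemma oppcE (R : realType) (a b : R) : (- Complex a b = Complex (- a) (- b))%R.
Proof. by []. Qed.

Lemma hermDl (R : realType) (f1 f2 g : vec R) : L2f f1 -> L2f f2 -> L2f g ->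
  herm (fun c => f1 c + f2 c) g = herm f1 g + herm f2 g.
Proof.
move=> h1 h2 hg; rewrite /herm addcE.
rewrite -(rsumD (absum_Re h1 hg) (absum_Re h2 hg)).
rewrite -(rsumD (absum_Im h1 hg) (absum_Im h2 hg)).
congr Complex; apply: congr1; apply/funext => c;
  by case: (f1 c) => a b; case: (f2 c) => x y; case: (g c) => z w /=; ring.
Qed.

Lemma hermDr (R : realType) (f g1 g2 : vec R) : L2f f -> L2f g1 -> L2f g2 ->
  herm f (fun c => g1 c + g2 c) = herm f g1 + herm f g2.
Proof.
move=> hf h1 h2; rewrite /herm addcE.
rewrite -(rsumD (absum_Re hf h1) (absum_Re hf h2)).
rewrite -(rsumD (absum_Im hf h1) (absum_Im hf h2)).
congr Complex; apply: congr1; apply/funext => c;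
  by case: (f c) => a b; case: (g1 c) => x y; case: (g2 c) => z w /=; ring.
Qed.

Lemma hermNl (R : realType) (f g : vec R) :
  herm (fun c => - f c) g = - herm f g.
Proof.
rewrite /herm oppcE -!rsumN.
congr Complex; apply: congr1; apply/funext => c;
  by case: (f c) => a b; case: (g c) => x y /=; ring.
Qed.

Lemma hermNr (R : realType) (f g : vec R) :
  herm f (fun c => - g c) = - herm f g.
Proof.
rewrite /herm oppcE -!rsumN.
congr Complex; apply: congr1; apply/funext => c;
  by case: (f c) => a b; case: (g c) => x y /=; ring.
Qed.
Definition s1 (c : vtx) : vtx := match c with c0 n => c1 n | c1 n => c0 n | x => x end.
Definition s2 (c : vtx) : vtx := match c with c0 n => c1 n.+1 | c1 n.+1 => c0 n | x => x end.
Definition s3 (c : vtx) : vtx := match c with c0p => c1 1 | c1 (S O) => c0p | x => x end.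
Definition s4 (c : vtx) : vtx := match c with c0m => c1 1 | c1 (S O) => c0m | x => x end.
Definition D1 (c : vtx) : bool := if c is c1 n.+1 then true else false.
Definition D2 (c : vtx) : bool := if c is c1 n.+2 then true else false.
Definition D3 (W : diagram) (c : vtx) : bool :=
  match W, c with D_half_inf, c1 (S O) => true | _, _ => false end.

Lemma s1K : involutive s1. Proof. by case. Qed.
Lemma s2K : involutive s2. Proof. by case=> [n|[|n]||]. Qed.
Lemma s3K : involutive s3. Proof. by case=> [n|[|[|n]]||]. Qed.
Lemma s4K : involutive s4. Proof. by case=> [n|[|[|n]]||]. Qed.

Definition veqb (c d : vtx) : bool :=
  match c, d with
  | c0 n, c0 m => n == m | c1 n, c1 m => n == m
  | c0p, c0p => true | c0m, c0m => true | _, _ => false end.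
Lemma veqbP c d : reflect (c = d) (veqb c d).
Proof.
case: c; case: d => /=; try (by constructor); try (by move=> *; constructor);
  move=> m n; apply: (iffP eqP) => [->|[]] //.
Qed.

Definition CWb (W : diagram) (c : vtx) : bool :=
  match c with c0 n => 1 <= n | c1 n => 1 <= n
  | c0p | c0m => if W is D_half_inf then true else false end%N.
Lemma CWP W c : CW W c <-> CWb W c.
Proof.
rewrite /CW /CW0 /CW1; case: c => [n|n||] /=; split; try tauto;
  try (by case; case: W); try (by case W => // ?; left).
Qed.

Definition adjb (W : diagram) (c c' : vtx) : bool :=
  match c, c' with
  | c0 n, c1 m => (1 <= n)%N && ((m == n) || (m == n.+1))
  | c0p, c1 m => (if W is D_half_inf then true else false) && (m == 1)%N
  | c0m, c1 m => (if W is D_half_inf then true else false) && (m == 1)%N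
  | _, _ => false end.
Lemma adjP W c c' : adj W c c' <-> adjb W c c'.
Proof.
rewrite /adj /CW0 /CW1; case: c => [n|n||]; case: c' => [m|m||] /=; try tauto;
 case: W; split => //; try (by case=> _ [_ ->]);
 try (move=> [h1 [h2 [->|->]]]; rewrite h1 ?eqxx ?orbT //);
 try (move=> /andP[h1 /orP[/eqP->|/eqP->]]; do 2 split => //);
 try (move=> /eqP->; do 2 split => //); try tauto; by case.
Qed.

Lemma asbool_eqb (P : Prop) (b : bool) : (P <-> b) -> `[< P >] = b.
Proof.
move=> h; case: asboolP => [/h ->//|np]; apply/esym/negP => /h; exact: np.
Qed.

Lemma JentryE (R : realType) W c c' : CWb W c ->
  Jentry R W c' c = (if veqb c' c then 1 else 0) +
    ((if veqb c' (s1 c) && D1 c then -1 else 0) +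
    ((if veqb c' (s2 c) && D2 c then -1 else 0) +
    ((if veqb c' (s3 c) && D3 W c then -1 else 0) +
     (if veqb c' (s4 c) && D3 W c then -1 else 0)))).
Proof.
move=> hc; rewrite /Jentry.
rewrite (@asbool_eqb _ (CWb W c' && veqb c' c)); last first.
  by rewrite -(rwP andP) -(rwP (veqbP _ _)) CWP.
rewrite (asbool_eqb (adjP W c' c)).
case: W hc; case: c => [n|n||]; case: c' => [m|m||] /=;
  try (case: n => [|[|n]]); try (case: m => [|[|m]]); move=> //= hc;
  repeat (match goal with |- context[if ?b then _ else _] => let E := fresh in case E: b end);
  rewrite ?addr0 ?add0r //; try lia.
all: idtac.
Qed.

Lemma fsum_single (R : realType) (A : set vtx) (G : vtx -> R[i]) a :
  (forall x, x != a -> G x = 0) -> (~ A a -> G a = 0) -> \sum_(x \in A) G x = G a.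
Proof.
move=> hG hA; case: (pselect (A a)) => Aa.
  rewrite -(fsbig_widen [set a] A G) ?fsbig_set1 //; first by move=> x ->.
  by move=> x [_ xa]; apply: hG; apply/eqP.
rewrite fsbig1 ?hA // => i Ai; case: (eqVneq i a) => [ia|/hG //].
by rewrite ia in Ai.
Qed.

Lemma veqbb c : veqb c c. Proof. by apply/veqbP. Qed.

Lemma sum_expand (R : realType) W (u : vec R) c a1 a2 a3 a4 b1 b2 b3 b4 :
  inH W u ->
  \sum_(c' \in CW W) u c' * ((if veqb c' c then 1 else 0) +
    ((if veqb c' a1 && b1 then -1 else 0) +
    ((if veqb c' a2 && b2 then -1 else 0) +
    ((if veqb c' a3 && b3 then -1 else 0) +
     (if veqb c' a4 && b4 then -1 else 0))))) =
  u c + -1 * ((if b1 then u a1 else 0) + ((if b2 then u a2 else 0) +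
             ((if b3 then u a3 else 0) + (if b4 then u a4 else 0)))).
Proof.
move=> [hu fu].
set S := [set x | u x != 0].
have SC : S `<=` CW W.
  move=> x /= ux; case: (pselect (CW W x)) => // /hu ux0; by move: ux; rewrite /S /= ux0 eqxx.
have Z : forall x, ~ S x -> u x = 0 by move=> x /negP; rewrite negbK => /eqP.
rewrite -(fsbig_widen S (CW W)) //; last first.
  by move=> x [_ /Z ux]; rewrite /preimage /= ux mul0r.
rewrite (eq_fsbigr (fun c' => u c' * (if veqb c' c then 1 else 0) +
   (u c' * (if veqb c' a1 && b1 then -1 else 0) +
   (u c' * (if veqb c' a2 && b2 then -1 else 0) +
   (u c' * (if veqb c' a3 && b3 then -1 else 0) +
    u c' * (if veqb c' a4 && b4 then -1 else 0)))))); last first.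
  by move=> x _; rewrite !mulrDr.
rewrite !fsbig_split //.
have single : forall (a : vtx) (P : vtx -> bool) (v : R[i]),
   (forall x, P x -> x = a) ->
   \sum_(x \in S) u x * (if P x then v else 0) = u a * (if P a then v else 0).
  move=> a P v hP; apply: fsum_single => [x xa|/Z ->]; last by rewrite mul0r.
  by case: ifP => [/hP xa'|]; [rewrite xa' eqxx in xa|rewrite mulr0].
rewrite (single c (fun x => veqb x c)); last by move=> x /veqbP.
rewrite (single a1 (fun x => veqb x a1 && b1)); last by move=> x /andP[/veqbP].
rewrite (single a2 (fun x => veqb x a2 && b2)); last by move=> x /andP[/veqbP].
rewrite (single a3 (fun x => veqb x a3 && b3)); last by move=> x /andP[/veqbP].
rewrite (single a4 (fun x => veqb x a4 && b4)); last by move=> x /andP[/veqbP].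
rewrite !veqbb /=.
case: b1; case: b2; case: b3; case: b4; ring.
Qed.

Definition P (R : realType) (s : vtx -> vtx) (D : vtx -> bool) (f : vec R) : vec R :=
  fun c => if D c then f (s c) else 0.
Definition NN (R : realType) (d1 d2 d3 d4 : vtx -> bool) (f : vec R) : vec R :=
  fun c => P s1 d1 f c + (P s2 d2 f c + (P s3 d3 f c + P s4 d4 f c)).
Definition Op (R : realType) (e : R[i]) (d1 d2 d3 d4 : vtx -> bool) (f : vec R) : vec R :=
  fun c => f c + e * NN d1 d2 d3 d4 f c.

Definition JD1 := D1. Definition JD2 := D2. Definition JD3 W := D3 W.
Definition tD1 := fun x => D1 (s1 x). Definition tD2 := fun x => D2 (s2 x).
Definition tD3 W := fun x => D3 W (s3 x). Definition tD4 W := fun x => D3 W (s4 x).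

Lemma D1_CW W c : D1 c -> CWb W c. Proof. by case: c => // -[]. Qed.
Lemma D2_CW W c : D2 c -> CWb W c. Proof. by case: c => // -[|[]]. Qed.
Lemma D3_CW W c : D3 W c -> CWb W c. Proof. by case: W; case: c => // -[|[]]. Qed.
Lemma tD1_CW W c : tD1 c -> CWb W c. Proof. by case: c => // -[]. Qed.
Lemma tD2_CW W c : tD2 c -> CWb W c. Proof. by case: c => // -[]. Qed.
Lemma tD3_CW W c : tD3 W c -> CWb W c. Proof. by case: W; case: c => // -[|[]]. Qed.
Lemma tD4_CW W c : tD4 W c -> CWb W c. Proof. by case: W; case: c => // -[|[]]. Qed.

Lemma notCW_false (d : vtx -> bool) W c : (d c -> CWb W c) -> ~ CW W c -> d c = false.
Proof. by move=> h hc; apply/negP => /h /CWP. Qed.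

Lemma JWdotE (R : realType) W (u : vec R) : inH W u ->
  JWdot W u = Op (-1) D1 D2 (D3 W) (D3 W) u.
Proof.
move=> hu; apply/funext => c; rewrite /JWdot.
case: asboolP => hc; last first.
  rewrite /Op /NN /P (notCW_false (@D1_CW W c) hc) (notCW_false (@D2_CW W c) hc).
  by rewrite (notCW_false (@D3_CW W c) hc) hu.1 // !addr0 mulr0 addr0.
rewrite /JW (eq_fsbigr (fun c' => u c' * Jentry R W c' c)); last first.
  move=> c' _; rewrite (fsum_single (a := c)) //.
    by rewrite /gamma asboolT // mulr1.
  by move=> x xc; rewrite /gamma asboolF ?mulr0 ?mul0r //; apply/eqP.
have hcb : CWb W c by apply/CWP.
rewrite (eq_fsbigr (fun c' => u c' * ((if veqb c' c then 1 else 0) +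
    ((if veqb c' (s1 c) && D1 c then -1 else 0) +
    ((if veqb c' (s2 c) && D2 c then -1 else 0) +
    ((if veqb c' (s3 c) && D3 W c then -1 else 0) +
     (if veqb c' (s4 c) && D3 W c then -1 else 0))))))); last first.
  by move=> c' _; rewrite JentryE.
by rewrite (sum_expand _ _ _ _ _ _ _ _ _ hu).
Qed.

Lemma veqb_sym c d : veqb c d = veqb d c.
Proof. by apply/veqbP/veqbP. Qed.

Lemma swap_s (s : vtx -> vtx) (hs : involutive s) (D : vtx -> bool) c d :
  veqb c (s d) && D d = veqb d (s c) && D (s c).
Proof.
case: (veqbP c (s d)) => [->|h]; first by rewrite hs veqbb.
by case: (veqbP d (s c)) => // e; case: h; rewrite e hs.
Qed.

Lemma tJWdotE (R : realType) W (u : vec R) : inH W u ->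
  tJWdot W u = Op (-1) tD1 tD2 (tD3 W) (tD4 W) u.
Proof.
move=> hu; apply/funext => c; rewrite /tJWdot.
case: asboolP => hc; last first.
  rewrite /Op /NN /P (notCW_false (@tD1_CW W c) hc) (notCW_false (@tD2_CW W c) hc).
  rewrite (notCW_false (@tD3_CW W c) hc) (notCW_false (@tD4_CW W c) hc).
  by rewrite hu.1 // !addr0 mulr0 addr0.
rewrite /tJW /JW (fsum_single (a := c)) //; last first.
  move=> x xc; apply: fsbig1 => y _.
  by rewrite /gamma asboolF ?mul0r //; apply/eqP.
rewrite /gamma asboolT //.
rewrite (eq_fsbigr (fun c' => u c' * ((if veqb c' c then 1 else 0) +
    ((if veqb c' (s1 c) && tD1 c then -1 else 0) +
    ((if veqb c' (s2 c) && tD2 c then -1 else 0) +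
    ((if veqb c' (s3 c) && tD3 W c then -1 else 0) +
     (if veqb c' (s4 c) && tD4 W c then -1 else 0))))))); last first.
  move=> c' /set_mem hc'; rewrite JentryE; last exact/CWP.
  rewrite mul1r veqb_sym (swap_s s1K) (swap_s s2K) (swap_s s3K) (swap_s s4K).
  by [].
by rewrite (sum_expand _ _ _ _ _ _ _ _ _ hu).
Qed.


Lemma hermP (R : realType) (s : vtx -> vtx) (hs : involutive s) (d : vtx -> bool) (f g : vec R) :
  herm (P s d f) g = herm f (P s (fun x => d (s x)) g).
Proof.
rewrite /herm.
rewrite -(rsum_inv hs (fun c => complex.Re (f c * conjc (P s (fun x => d (s x)) g c)))).
rewrite -(rsum_inv hs (fun c => complex.Im (f c * conjc (P s (fun x => d (s x)) g c)))).
congr Complex; apply: congr1; apply/funext => c; rewrite /P hs;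
  case: (d c) => //; case: (f (s c)) => a b; case: (g c) => x y /=; ring.
Qed.

Lemma L2P (R : realType) (s : vtx -> vtx) (hs : involutive s) (d : vtx -> bool) (f : vec R) :
  L2f f -> L2f (P s d f).
Proof.
move=> hf; apply: le_lt_trans hf.
rewrite /l2norm2 -(esum_inv hs (fun c => (sqnorm (f c))%:E)).
apply: le_esum => c _; rewrite lee_fin /P; case: (d c) => //.
have -> : sqnorm (0 : R[i]) = 0 by rewrite /sqnorm /= expr2 mulr0 addr0.
by rewrite sqnorm_ge0.
Qed.

Lemma L2NN (R : realType) d1 d2 d3 d4 (f : vec R) : L2f f -> L2f (NN d1 d2 d3 d4 f).
Proof.
move=> hf; rewrite /NN.
by apply: L2D; [|apply: L2D; [|apply: L2D]]; apply: L2P => //;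
  [exact: s1K|exact: s2K|exact: s3K|exact: s4K].
Qed.

Lemma hermNNl (R : realType) d1 d2 d3 d4 (f g : vec R) : L2f f -> L2f g ->
  herm (NN d1 d2 d3 d4 f) g =
  herm f (NN (fun x => d1 (s1 x)) (fun x => d2 (s2 x)) (fun x => d3 (s3 x))
             (fun x => d4 (s4 x)) g).
Proof.
move=> hf hg.
have L := fun s (hs : involutive s) d => L2P hs d hf.
have L' := fun s (hs : involutive s) d => L2P hs d hg.
rewrite /NN hermDl ?(L _ s1K) //; last by apply: L2D; [|apply: L2D]; apply: L2P => //;
  [exact: s2K|exact: s3K|exact: s4K].
rewrite hermDl ?(L _ s2K) //; last by apply: L2D; apply: L2P => //; [exact: s3K|exact: s4K].
rewrite hermDl ?(L _ s3K) ?(L _ s4K) //.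
rewrite hermDr ?(L' _ s1K) //; last by apply: L2D; [|apply: L2D]; apply: L2P => //;
  [exact: s2K|exact: s3K|exact: s4K].
rewrite hermDr ?(L' _ s2K) //; last by apply: L2D; apply: L2P => //; [exact: s3K|exact: s4K].
rewrite hermDr ?(L' _ s3K) ?(L' _ s4K) //.
by rewrite (hermP s1K) (hermP s2K) (hermP s3K) (hermP s4K).
Qed.

Lemma hermOp (R : realType) (e : R[i]) d1 d2 d3 d4 (f g : vec R) :
  e = 1 \/ e = -1 -> L2f f -> L2f g ->
  herm (Op e d1 d2 d3 d4 f) g =
  herm f (Op e (fun x => d1 (s1 x)) (fun x => d2 (s2 x)) (fun x => d3 (s3 x))
             (fun x => d4 (s4 x)) g).
Proof.
move=> [->|->] hf hg; rewrite /Op.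
  have -> : (fun c => f c + 1 * NN d1 d2 d3 d4 f c) = (fun c => f c + NN d1 d2 d3 d4 f c).
    by apply/funext => c; rewrite mul1r.
  have -> : (fun c => g c + 1 * NN (fun x => d1 (s1 x)) (fun x => d2 (s2 x)) (fun x => d3 (s3 x))
             (fun x => d4 (s4 x)) g c) = (fun c => g c + NN (fun x => d1 (s1 x)) (fun x => d2 (s2 x)) (fun x => d3 (s3 x))
             (fun x => d4 (s4 x)) g c).
    by apply/funext => c; rewrite mul1r.
  by rewrite hermDl ?L2NN // hermDr ?L2NN // hermNNl.
have -> : (fun c => f c + -1 * NN d1 d2 d3 d4 f c) = (fun c => f c + - NN d1 d2 d3 d4 f c).
  by apply/funext => c; rewrite mulN1r.
have -> : (fun c => g c + -1 * NN (fun x => d1 (s1 x)) (fun x => d2 (s2 x)) (fun x => d3 (s3 x))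
           (fun x => d4 (s4 x)) g c) = (fun c => g c + - NN (fun x => d1 (s1 x)) (fun x => d2 (s2 x)) (fun x => d3 (s3 x))
           (fun x => d4 (s4 x)) g c).
  by apply/funext => c; rewrite mulN1r.
rewrite hermDl ?L2N ?L2NN // hermDr ?L2N ?L2NN //.
by rewrite hermNl hermNr hermNNl.
Qed.


Definition CWcompat (W : diagram) (d1 d2 d3 d4 : vtx -> bool) :=
  forall c, d1 c || d2 c || d3 c || d4 c -> CWb W c.

Lemma Op_vanish (R : realType) W (e : R[i]) d1 d2 d3 d4 (f : vec R) :
  CWcompat W d1 d2 d3 d4 -> (forall c, ~ CW W c -> f c = 0) ->
  forall c, ~ CW W c -> Op e d1 d2 d3 d4 f c = 0.
Proof.
move=> hd hf c hc; rewrite /Op /NN /P hf //.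
have F : forall d : vtx -> bool, (d c -> CWb W c) -> d c = false :=
  fun d h => notCW_false h hc.
have h1 : d1 c = false by apply: F => h; apply: hd; rewrite h.
have h2 : d2 c = false by apply: F => h; apply: hd; rewrite h !orbT.
have h3 : d3 c = false by apply: F => h; apply: hd; rewrite h !orbT.
have h4 : d4 c = false by apply: F => h; apply: hd; rewrite h !orbT.
by rewrite h1 h2 h3 h4 !addr0 mulr0 addr0.
Qed.

Lemma inH_Op (R : realType) W (e : R[i]) d1 d2 d3 d4 (u : vec R) :
  CWcompat W d1 d2 d3 d4 -> inH W u -> inH W (Op e d1 d2 d3 d4 u).
Proof.
move=> hd [hu fu]; split; first exact: Op_vanish.
set S := [set c | u c != 0].
apply: (@sub_finite_set _ _ (S `|` (s1 @` S `|` (s2 @` S `|` (s3 @` S `|` s4 @` S))))); last first.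
  by rewrite !finite_setU; do !split => //; apply: finite_image.
move=> x /= nz.
have Z : forall y, ~ (u y != 0) -> u y = 0 by move=> y /negP; rewrite negbK => /eqP.
case: (pselect (u x != 0)) => h0; first by left.
case: (pselect (u (s1 x) != 0)) => h1; first by right; left; exists (s1 x) => //; rewrite s1K.
case: (pselect (u (s2 x) != 0)) => h2; first by right; right; left; exists (s2 x) => //; rewrite s2K.
case: (pselect (u (s3 x) != 0)) => h3; first by right; right; right; left; exists (s3 x) => //; rewrite s3K.
case: (pselect (u (s4 x) != 0)) => h4; first by right; right; right; right; exists (s4 x) => //; rewrite s4K.
exfalso; move/eqP: nz; apply.
rewrite /Op.
rewrite /NN.
rewrite /P.
rewrite (Z _ h0).
rewrite (Z _ h1) (Z _ h2) (Z _ h3) (Z _ h4).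
by rewrite !if_same !addr0 mulr0 addr0.
Qed.


Definition nilcond (d1 d2 d3 d4 : vtx -> bool) :=
  forall c, [/\ d1 c -> ~~ [|| d1 (s1 c), d2 (s1 c), d3 (s1 c) | d4 (s1 c)],
               d2 c -> ~~ [|| d1 (s2 c), d2 (s2 c), d3 (s2 c) | d4 (s2 c)],
               d3 c -> ~~ [|| d1 (s3 c), d2 (s3 c), d3 (s3 c) | d4 (s3 c)] &
               d4 c -> ~~ [|| d1 (s4 c), d2 (s4 c), d3 (s4 c) | d4 (s4 c)]].

Lemma nil_J W : nilcond D1 D2 (D3 W) (D3 W).
Proof. move=> c; case: W; case: c => [n|[|[|n]]||]. all: by split. Qed.
Lemma nil_tJ W : nilcond tD1 tD2 (tD3 W) (tD4 W).
Proof. move=> c; case: W; case: c => [[|[|n]]|[|[|n]]||]. all: by split. Qed.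

Lemma NN_lin (R : realType) (e : R[i]) d1 d2 d3 d4 (f g : vec R) c :
  NN d1 d2 d3 d4 (fun x => f x + e * g x) c = NN d1 d2 d3 d4 f c + e * NN d1 d2 d3 d4 g c.
Proof.
rewrite /NN /P; case: (d1 c); case: (d2 c); case: (d3 c); case: (d4 c); ring.
Qed.

Lemma NN2 (R : realType) d1 d2 d3 d4 (f : vec R) c :
  nilcond d1 d2 d3 d4 -> NN d1 d2 d3 d4 (NN d1 d2 d3 d4 f) c = 0.
Proof.
move=> /(_ c) [h1 h2 h3 h4].
have Z : forall y, ~~ [|| d1 y, d2 y, d3 y | d4 y] -> NN d1 d2 d3 d4 f y = 0.
  move=> y; rewrite /NN /P; case: (d1 y); case: (d2 y); case: (d3 y); case: (d4 y) => //= _.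
  by rewrite !addr0.
rewrite {1}/NN /P.
case: (boolP (d1 c)) => [/h1/Z ->|_]; case: (boolP (d2 c)) => [/h2/Z ->|_];
case: (boolP (d3 c)) => [/h3/Z ->|_]; case: (boolP (d4 c)) => [/h4/Z ->|_];
  by rewrite ?addr0.
Qed.

Lemma Op_inv (R : realType) (e e' : R[i]) d1 d2 d3 d4 (f : vec R) :
  nilcond d1 d2 d3 d4 -> e + e' = 0 ->
  Op e d1 d2 d3 d4 (Op e' d1 d2 d3 d4 f) = f.
Proof.
move=> hn he; apply/funext => c; rewrite /Op NN_lin NN2 //.
have -> : e' = - e by apply/eqP; rewrite -subr_eq0 opprK addrC he.
ring.
Qed.


Lemma esum_mulrn (R : realType) (x : vtx -> R) n : (forall c, 0 <= x c) ->
  (\esum_(c in [set: vtx]) (x c *+ n)%:E = (\esum_(c in [set: vtx]) (x c)%:E) *+ n)%E.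
Proof.
move=> hx; elim: n => [|n IH].
  by rewrite esum1 // => c _; rewrite mulr0n.
rewrite (eq_esum (b := fun c => ((x c)%:E + (x c *+ n)%:E)%E)); last first.
  by move=> c _; rewrite mulrS EFinD.
rewrite esumD; [|by move=> c _; rewrite lee_fin|by move=> c _; rewrite lee_fin mulrn_wge0].
by rewrite IH muleS.
Qed.

Lemma sqnorm0 (R : realType) : sqnorm (0 : R[i]) = 0.
Proof. by rewrite /sqnorm /= expr2 mulr0 addr0. Qed.

Lemma Op_bound (R : realType) (e : R[i]) d1 d2 d3 d4 (f : vec R) :
  sqnorm e = 1 -> L2f f ->
  (l2norm2 (Op e d1 d2 d3 d4 f) <= (80%:R)%:E * l2norm2 f)%E.
Proof.
move=> he hf.
have Pb : forall s d c, sqnorm (P s d f c) <= sqnorm (f (s c)).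
  by move=> s d c; rewrite /P; case: (d c); rewrite ?sqnorm0 ?sqnorm_ge0.
set h := fun c => sqnorm (f c) + (sqnorm (f (s1 c)) + (sqnorm (f (s2 c)) +
                 (sqnorm (f (s3 c)) + sqnorm (f (s4 c))))).
have hge : forall c, 0 <= h c.
  move=> c; rewrite /h /=; do 4 (apply: addr_ge0; first exact: sqnorm_ge0); exact: sqnorm_ge0.
have pw : forall c, sqnorm (Op e d1 d2 d3 d4 f c) <= h c *+ 16.
  move=> c; rewrite /Op /NN.
  set p1 := P s1 d1 f c; set p2 := P s2 d2 f c; set p3 := P s3 d3 f c; set p4 := P s4 d4 f c.
  have A := sqnormD (f c) (e * (p1 + (p2 + (p3 + p4)))); rewrite sqnormM he mul1r in A.
  have B := sqnormD p1 (p2 + (p3 + p4)); have C := sqnormD p2 (p3 + p4).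
  have D := sqnormD p3 p4.
  have := Pb s1 d1 c; have := Pb s2 d2 c; have := Pb s3 d3 c; have := Pb s4 d4 c.
  have := sqnorm_ge0 (f c); have := sqnorm_ge0 p1; have := sqnorm_ge0 p2.
  have := sqnorm_ge0 p3; have := sqnorm_ge0 p4.
  rewrite -/p1 -/p2 -/p3 -/p4 /h /= -mulr_natr; lra.
have Er : l2norm2 f = (fine (l2norm2 f))%:E.
  by rewrite fineK // ge0_fin_numE // esum_ge0 // => c _; rewrite lee_fin sqnorm_ge0.
set r := fine (l2norm2 f) in Er.
apply: (@le_trans _ _ (\esum_(c in [set: vtx]) (h c *+ 16)%:E)%E).
  by apply: le_esum => c _; rewrite lee_fin.
rewrite esum_mulrn //.
have Eh : (\esum_(c in [set: vtx]) (h c)%:E = (r + (r + (r + (r + r))))%:E)%E.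
  rewrite (eq_esum (b := fun c => ((sqnorm (f c))%:E + ((sqnorm (f (s1 c)))%:E +
     ((sqnorm (f (s2 c)))%:E + ((sqnorm (f (s3 c)))%:E + (sqnorm (f (s4 c)))%:E))))%E)); last first.
    by move=> c _; rewrite /h !EFinD.
  have g0 : forall c, (0 <= (sqnorm (f c))%:E)%E by move=> c; rewrite lee_fin sqnorm_ge0.
  rewrite esumD //; last by move=> c _; rewrite !adde_ge0.
  rewrite esumD //; last by move=> c _; rewrite !adde_ge0.
  rewrite esumD //; last by move=> c _; rewrite !adde_ge0.
  rewrite esumD //.
  rewrite (esum_inv s1K (fun c => (sqnorm (f c))%:E)).
  rewrite (esum_inv s2K (fun c => (sqnorm (f c))%:E)).
  rewrite (esum_inv s3K (fun c => (sqnorm (f c))%:E)).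
  rewrite (esum_inv s4K (fun c => (sqnorm (f c))%:E)).
  by rewrite -/(l2norm2 f) Er !EFinD.
rewrite Eh Er -EFin_natmul -EFinM lee_fin -mulr_natr.
have : 0 <= r by rewrite /r fine_ge0 // esum_ge0 // => c _; rewrite lee_fin sqnorm_ge0.
lra.
Qed.


Lemma bext_Op (R : realType) W (e : R[i]) d1 d2 d3 d4 (phi : vec R -> vec R) :
  CWcompat W d1 d2 d3 d4 -> e = 1 \/ e = -1 ->
  (forall u, inH W u -> Op e d1 d2 d3 d4 u = phi u) ->
  bounded_extension W phi (Op e d1 d2 d3 d4).
Proof.
move=> hd he hphi.
have sqe : sqnorm e = 1.
  by case: he => ->; rewrite /sqnorm /= ?expr0n /= ?expr1n ?sqrrN ?expr1n ?expr0n /= ?addr0.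
split.
- move=> f [hv hf]; split; first exact: Op_vanish.
  apply: le_lt_trans (Op_bound d1 d2 d3 d4 sqe hf) _.
  have Er : l2norm2 f = (fine (l2norm2 f))%:E.
    by rewrite fineK // ge0_fin_numE // esum_ge0 // => c _; rewrite lee_fin sqnorm_ge0.
  by rewrite Er -EFinM ltry.
- move=> a f g _ _; apply/funext => c; rewrite /Op /NN /P.
  by case: (d1 c); case: (d2 c); case: (d3 c); case: (d4 c); ring.
- exists 80%:R; split; first by rewrite ler0n.
  by move=> f [_ hf]; apply: Op_bound.
- exact: hphi.
Qed.

Lemma compat_J W : CWcompat W D1 D2 (D3 W) (D3 W).
Proof.
move=> c; case/orP => [/orP[/orP[/D1_CW|/D2_CW]|/D3_CW]|/D3_CW] //.
Qed.

Lemma compat_tJ W : CWcompat W tD1 tD2 (tD3 W) (tD4 W).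
Proof.
move=> c; case/orP => [/orP[/orP[/tD1_CW|/tD2_CW]|/tD3_CW]|/tD4_CW] //.
Qed.

Theorem mainTheorem7 (R : realType) (W : diagram) :
  (forall u : vec R, inH W u -> inH W (JWdot W u) /\ inH W (tJWdot W u)) /\
  exists Jinv tJinv : vec R -> vec R,
    inverse_on_H W (JWdot W) Jinv /\ inverse_on_H W (tJWdot W) tJinv /\
    exists T tT Ti tTi : vec R -> vec R,
      [/\ bounded_extension W (JWdot W) T,
          bounded_extension W (tJWdot W) tT,
          bounded_extension W Jinv Ti
        & bounded_extension W tJinv tTi] /\
      adjoint_pair W T tT /\ adjoint_pair W Ti tTi.
Proof.
have cJ := @compat_J W; have ctJ := @compat_tJ W.
have e1 : (-1 : R[i]) + 1 = 0 by rewrite addNr.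
have e2 : (1 : R[i]) + -1 = 0 by rewrite addrN.
split.
  by move=> u hu; rewrite JWdotE // tJWdotE //; split; apply: inH_Op.
exists (Op 1 D1 D2 (D3 W) (D3 W)), (Op 1 tD1 tD2 (tD3 W) (tD4 W)).
split.
  move=> u hu; split; first exact: inH_Op.
    rewrite JWdotE; last exact: inH_Op.
    by rewrite Op_inv //; exact: nil_J.
  by rewrite JWdotE // Op_inv //; exact: nil_J.
split.
  move=> u hu; split; first exact: inH_Op.
    rewrite tJWdotE; last exact: inH_Op.
    by rewrite Op_inv //; exact: nil_tJ.
  by rewrite tJWdotE // Op_inv //; exact: nil_tJ.
exists (Op (-1) D1 D2 (D3 W) (D3 W)), (Op (-1) tD1 tD2 (tD3 W) (tD4 W)),
  (Op 1 D1 D2 (D3 W) (D3 W)), (Op 1 tD1 tD2 (tD3 W) (tD4 W)).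
split.
  split; apply: bext_Op => //; try (by right); try (by left).
  - by move=> u hu; rewrite JWdotE.
  - by move=> u hu; rewrite tJWdotE.
split => f g [_ hf] [_ hg].
  exact: (hermOp D1 D2 (D3 W) (D3 W) (or_intror erefl) hf hg).
exact: (hermOp D1 D2 (D3 W) (D3 W) (or_introl erefl) hf hg).
Qed.
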